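(* (i) The unimodal spi-logic $\mathsf{SPi}+\{\iota_{sym}\}$ is complex, and hence complete. (ii) $\mathsf{SPi}+\{\iota_{refl},\iota_{trans},\iota_{sym}\}=\mathsf{SPi}+\{\iota_{refl},\iota_{trans},\iota_{eucl}\}$, and this spi-logic is complex, and hence complete.
   Context: Unimodal setting: one diamond $\Diamond$. Sp-formulas: built from propositional variables and $\top$ by $\wedge$ and $\Diamond$; sp-implications $\sigma\to\tau$. A SLO is an algebra $(A,\wedge,\top,\Diamond)$ with $(A,\wedge,\top)$ a meet-semilattice with top and $\Diamond$ monotone; it validates $\sigma\to\tau$ if $\sigma[\mathfrak a]\le\tau[\mathfrak a]$ for all valuations. Frames $(W,R)$ with standard Kripke semantics. $\mathsf{SPi}+\Sigma$ is the set of sp-implications valid in every SLO validating $\Sigma$; it is complete if it equals the set of sp-implications valid in every frame validating $\Sigma$. For a frame $\mathfrak F=(W,R)$, $\mathfrak F^\star=(2^W,\cap,W,\Diamond^+)$ with $\Diamond^+X=\{w\mid\exists v\in X,(w,v)\in R\}$; a spi-logic $L$ is complex if every SLO validating $L$ embeds (injectively, preserving $\wedge,\top,\Diamond$) into $\mathfrak F^\star$ for some frame $\mathfrak F$ validating $L$. Notation: $\iota_{refl}=(p\to\Diamond p)$, $\iota_{trans}=(\Diamond\Diamond p\to\Diamond p)$, $\iota_{sym}=(q\wedge\Diamond p\to\Diamond(p\wedge\Diamond q))$, $\iota_{eucl}=(\Diamond p\wedge\Diamond q\to\Diamond(p\wedge\Diamond q))$. *)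

(* Defs.v *)
Set Implicit Arguments.

Inductive spf : Type :=
| Var : nat -> spf
| Top : spf
| And : spf -> spf -> spf
| Dia : spf -> spf.

Record spi : Type := Imp { ante : spf; cons : spf }.

Record SLO : Type := {
  carrier :> Type;
  meet : carrier -> carrier -> carrier;
  top : carrier;
  dia : carrier -> carrier;
  meet_assoc : forall a b c, meet a (meet b c) = meet (meet a b) c;
  meet_comm : forall a b, meet a b = meet b a;
  meet_idem : forall a, meet a a = a;
  meet_top : forall a, meet a top = a;
  dia_mono : forall a b, meet a b = a -> meet (dia a) (dia b) = dia a
}.

Definition sle (A : SLO) (a b : A) : Prop := meet A a b = a.

Fixpoint eval (A : SLO) (v : nat -> A) (f : spf) : A :=
  match f with
  | Var n => v n
  | Top => top A
  | And f g => meet A (eval A v f) (eval A v g)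
  | Dia f => dia A (eval A v f)
  end.

Definition slo_valid (A : SLO) (i : spi) : Prop :=
  forall v : nat -> A, sle A (eval A v (ante i)) (eval A v (cons i)).

Definition SPi (Sigma : spi -> Prop) : spi -> Prop :=
  fun i => forall A : SLO, (forall j, Sigma j -> slo_valid A j) -> slo_valid A i.

Record frame : Type := { world : Type; rel : world -> world -> Prop }.

Fixpoint sat (F : frame) (V : nat -> world F -> Prop) (w : world F) (f : spf)
  : Prop :=
  match f with
  | Var n => V n w
  | Top => True
  | And f g => sat F V w f /\ sat F V w g
  | Dia f => exists u, rel F w u /\ sat F V u f
  end.

Definition frame_valid (F : frame) (i : spi) : Prop :=
  forall (V : nat -> world F -> Prop) (w : world F),
    sat F V w (ante i) -> sat F V w (cons i).

Definition complete (Sigma : spi -> Prop) : Prop :=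
  forall i, SPi Sigma i <->
    (forall F : frame, (forall j, Sigma j -> frame_valid F j) -> frame_valid F i).

(** Complex algebra F* = (2^W, cap, W, Dia+); subsets of W as predicates. *)
Definition dia_plus (F : frame) (X : world F -> Prop) : world F -> Prop :=
  fun w => exists u, rel F w u /\ X u.

(** Injective (S)LO-embedding of A into F*; equality of subsets of W is
    extensional equality. *)
Definition embeds (A : SLO) (F : frame) : Prop :=
  exists h : A -> (world F -> Prop),
    (forall a b, (forall w, h a w <-> h b w) -> a = b) /\
    (forall a b w, h (meet A a b) w <-> (h a w /\ h b w)) /\
    (forall w, h (top A) w) /\
    (forall a w, h (dia A a) w <-> dia_plus F (h a) w).

Definition complex (L : spi -> Prop) : Prop :=
  forall A : SLO, (forall j, L j -> slo_valid A j) ->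
    exists F : frame, (forall j, L j -> frame_valid F j) /\ embeds A F.

Definition p := Var 0.
Definition q := Var 1.
Definition i_refl : spi := Imp p (Dia p).
Definition i_trans : spi := Imp (Dia (Dia p)) (Dia p).
Definition i_sym : spi := Imp (And q (Dia p)) (Dia (And p (Dia q))).
Definition i_eucl : spi := Imp (And (Dia p) (Dia q)) (Dia (And p (Dia q))).

Definition Sig_sym : spi -> Prop := fun i => i = i_sym.
Definition Sig_rts : spi -> Prop := fun i => i = i_refl \/ i = i_trans \/ i = i_sym.
Definition Sig_rte : spi -> Prop := fun i => i = i_refl \/ i = i_trans \/ i = i_eucl.

(* Main.v *)
Require Import Defs.
From Stdlib Require Import FunctionalExtensionality PropExtensionality.

Section Order.
Variable A : SLO.

Lemma sle_refl (a : A) : sle A a a.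
Proof. apply meet_idem. Qed.

Lemma sle_trans (a b c : A) : sle A a b -> sle A b c -> sle A a c.
Proof.
  unfold sle; intros H1 H2. rewrite <- H1 at 1. rewrite <- meet_assoc, H2. exact H1.
Qed.

Lemma meet_l (a b : A) : sle A (meet A a b) a.
Proof.
  unfold sle. rewrite (meet_comm A (meet A a b) a), meet_assoc, meet_idem. reflexivity.
Qed.

Lemma meet_r (a b : A) : sle A (meet A a b) b.
Proof. unfold sle. rewrite <- meet_assoc, meet_idem. reflexivity. Qed.

Lemma meet_glb (x a b : A) : sle A x a -> sle A x b -> sle A x (meet A a b).
Proof. unfold sle; intros H1 H2. rewrite meet_assoc, H1, H2. reflexivity. Qed.

Lemma sle_top (a : A) : sle A a (top A).
Proof. apply meet_top. Qed.

Lemma sle_antisym (a b : A) : sle A a b -> sle A b a -> a = b.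
Proof. unfold sle; intros H1 H2. transitivity (meet A a b); [symmetry; exact H1|]. rewrite meet_comm; exact H2. Qed.

Lemma dia_le (a b : A) : sle A a b -> sle A (dia A a) (dia A b).
Proof. apply dia_mono. Qed.

Lemma meet_mono (x x' y y' : A) : sle A x x' -> sle A y y' -> sle A (meet A x y) (meet A x' y').
Proof.
  intros H1 H2. apply meet_glb.
  - eapply sle_trans; [apply meet_l | exact H1].
  - eapply sle_trans; [apply meet_r | exact H2].
Qed.

Definition val2 (a b : A) : nat -> A := fun n => match n with 0 => a | _ => b end.

Lemma get_refl : slo_valid A i_refl -> forall a : A, sle A a (dia A a).
Proof. intros H a. exact (H (fun _ => a)). Qed.
Lemma get_trans : slo_valid A i_trans -> forall a : A, sle A (dia A (dia A a)) (dia A a).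
Proof. intros H a. exact (H (fun _ => a)). Qed.
Lemma get_sym : slo_valid A i_sym ->
  forall a b : A, sle A (meet A b (dia A a)) (dia A (meet A a (dia A b))).
Proof. intros H a b. exact (H (val2 a b)). Qed.
Lemma get_eucl : slo_valid A i_eucl ->
  forall a b : A, sle A (meet A (dia A a) (dia A b)) (dia A (meet A a (dia A b))).
Proof. intros H a b. exact (H (val2 a b)). Qed.

Lemma mk_eucl : (forall a b : A, sle A (meet A (dia A a) (dia A b)) (dia A (meet A a (dia A b))))
  -> slo_valid A i_eucl.
Proof. intros H v. apply H. Qed.
Lemma mk_sym : (forall a b : A, sle A (meet A b (dia A a)) (dia A (meet A a (dia A b))))
  -> slo_valid A i_sym.
Proof. intros H v. apply H. Qed.

Record filt : Type := {
  fm : A -> Prop;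
  f_top : fm (top A);
  f_up : forall a b, fm a -> sle A a b -> fm b;
  f_meet : forall a b, fm a -> fm b -> fm (meet A a b) }.

Definition Rf (F G : filt) : Prop :=
  (forall a, fm G a -> fm F (dia A a)) /\ (forall a, fm F a -> fm G (dia A a)).

Definition canon : frame := {| world := filt; rel := Rf |}.

Definition princ (a : A) : filt.
Proof.
  refine {| fm := fun x => sle A a x |}.
  - apply sle_top.
  - intros x y H1 H2. eapply sle_trans; eauto.
  - intros x y H1 H2. apply meet_glb; auto.
Defined.

Hypothesis Hsym : slo_valid A i_sym.

Definition gen (F : filt) (a : A) : filt.
Proof.
  refine {| fm := fun x => exists b, fm F b /\ sle A (meet A a (dia A b)) x |}.
  - exists (top A). split; [apply f_top | apply sle_top].
  - intros x y [b [Hb H1]] H2. exists b. split; auto. eapply sle_trans; eauto.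
  - intros x y [b1 [Hb1 H1]] [b2 [Hb2 H2]]. exists (meet A b1 b2). split.
    + apply f_meet; auto.
    + apply meet_glb.
      * eapply sle_trans; [|exact H1]. apply meet_mono; [apply sle_refl|].
        apply dia_le, meet_l.
      * eapply sle_trans; [|exact H2]. apply meet_mono; [apply sle_refl|].
        apply dia_le, meet_r.
Defined.

Lemma canon_embeds : embeds A canon.
Proof.
  exists (fun a (F : filt) => fm F a). split; [|split; [|split]].
  - intros a b H. apply sle_antisym.
    + apply (H (princ a)). apply sle_refl.
    + apply (H (princ b)). apply sle_refl.
  - intros a b w. split.
    + intros H. split; eapply f_up; eauto; [apply meet_l | apply meet_r].
    + intros [H1 H2]. apply f_meet; auto.
  - intros w. apply f_top.
  - intros a w. split.
    + intros H. exists (gen w a). split; [split|].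
      * intros x [b [Hb Hx]]. eapply f_up; [| apply dia_le; exact Hx].
        eapply f_up; [| apply (get_sym Hsym)]. apply f_meet; auto.
      * intros b Hb. exists b. split; auto. apply meet_r.
      * exists (top A). split; [apply f_top | apply meet_l].
    + intros [u [[H1 H2] H3]]. apply H1; auto.
Qed.

Lemma canon_sym : frame_valid canon i_sym.
Proof.
  intros V w [Hq [u [[H1 H2] Hp]]]. exists u. split; [split; auto|].
  split; auto. exists w. split; [split; auto | exact Hq].
Qed.

Lemma canon_refl : slo_valid A i_refl -> frame_valid canon i_refl.
Proof.
  intros Hr V w Hp. exists w. split; auto.
  split; intros a Ha; eapply f_up; eauto; apply (get_refl Hr).
Qed.

Lemma canon_trans : slo_valid A i_trans -> frame_valid canon i_trans.
Proof.
  intros Ht V w [u [[H1 H2] [u' [[H3 H4] Hp]]]]. exists u'. split; auto.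
  split; intros a Ha.
  - eapply f_up; [apply H1, H3, Ha | apply (get_trans Ht)].
  - eapply f_up; [apply H4, H2, Ha | apply (get_trans Ht)].
Qed.

End Order.

Definition Fstar (F : frame) : SLO.
Proof.
  refine {| carrier := world F -> Prop;
            meet := fun X Y w => X w /\ Y w;
            top := fun _ => True;
            dia := dia_plus F |}.
  - intros a b c. apply functional_extensionality; intros w.
    apply propositional_extensionality; tauto.
  - intros a b. apply functional_extensionality; intros w.
    apply propositional_extensionality; tauto.
  - intros a. apply functional_extensionality; intros w.
    apply propositional_extensionality; tauto.
  - intros a. apply functional_extensionality; intros w.
    apply propositional_extensionality; tauto.
  - intros a b H. apply functional_extensionality; intros w.
    apply propositional_extensionality. split; [tauto|].
    intros Hw; split; auto. destruct Hw as [u [Hr Hu]]. exists u; split; auto.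
    assert (E := equal_f H u). simpl in E. rewrite <- E in Hu. tauto.
Defined.

Lemma eval_star (F : frame) v f w : eval (Fstar F) v f w <-> sat F v w f.
Proof.
  revert w; induction f; intros w; simpl; try tauto.
  - rewrite IHf1, IHf2. tauto.
  - split; intros [u [Hr Hu]]; exists u; split; auto; apply IHf; auto.
Qed.

Lemma in_SPi (S : spi -> Prop) j : S j -> SPi S j.
Proof. intros Hj B HB. apply HB, Hj. Qed.

Lemma frame_sound (S : spi -> Prop) (F : frame) :
  (forall j, S j -> frame_valid F j) -> forall i, SPi S i -> frame_valid F i.
Proof.
  intros HF i Hi.
  assert (Hv : slo_valid (Fstar F) i).
  { apply Hi. intros j Hj v. unfold sle. apply functional_extensionality; intros w.
    apply propositional_extensionality. simpl. split; [tauto|].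
    intros H; split; auto. apply eval_star. apply (HF j Hj). apply eval_star. exact H. }
  intros V w H. specialize (Hv V). unfold sle in Hv.
  assert (E := equal_f Hv w). simpl in E. apply eval_star.
  apply eval_star in H. rewrite <- E in H. tauto.
Qed.

Lemma eval_embed (A : SLO) (F : frame) (h : A -> world F -> Prop)
  (Hm : forall a b w, h (meet A a b) w <-> (h a w /\ h b w))
  (Ht : forall w, h (top A) w)
  (Hd : forall a w, h (dia A a) w <-> dia_plus F (h a) w) v f w :
  h (eval A v f) w <-> sat F (fun n => h (v n)) w f.
Proof.
  revert w; induction f; intros w; simpl.
  - tauto.
  - split; auto.
  - rewrite Hm, IHf1, IHf2. tauto.
  - rewrite Hd. unfold dia_plus.
    split; intros [u [Hr Hu]]; exists u; split; auto; apply IHf; auto.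
Qed.

Lemma complex_complete (S : spi -> Prop) : complex (SPi S) -> complete S.
Proof.
  intros Hc i. split.
  - intros Hi F HF. apply (frame_sound S F HF i Hi).
  - intros H A HA.
    destruct (Hc A (fun j Hj => Hj A HA)) as [F [HF [h [Hinj [Hm [Ht Hd]]]]]].
    assert (Hi : frame_valid F i).
    { apply H. intros j Hj. apply HF, in_SPi, Hj. }
    intros v. unfold sle. apply Hinj. intros w. rewrite Hm. split; [tauto|].
    intros Ha. split; auto.
    apply (eval_embed A F h Hm Ht Hd). apply Hi. apply (eval_embed A F h Hm Ht Hd). exact Ha.
Qed.

Theorem theorem5p14 :
  (complex (SPi Sig_sym) /\ complete Sig_sym) /\
  ((forall i, SPi Sig_rts i <-> SPi Sig_rte i) /\
   complex (SPi Sig_rts) /\ complete Sig_rts).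
Proof.
  assert (C1 : complex (SPi Sig_sym)).
  { intros A HA. assert (Hs : slo_valid A i_sym) by (apply HA, in_SPi; reflexivity).
    exists (canon A). split.
    - apply frame_sound. intros j Hj. unfold Sig_sym in Hj; subst. apply canon_sym.
    - apply canon_embeds, Hs. }
  assert (C2 : complex (SPi Sig_rts)).
  { intros A HA.
    assert (Hs : slo_valid A i_sym) by (apply HA, in_SPi; unfold Sig_rts; auto).
    assert (Hr : slo_valid A i_refl) by (apply HA, in_SPi; unfold Sig_rts; auto).
    assert (Ht : slo_valid A i_trans) by (apply HA, in_SPi; unfold Sig_rts; auto).
    exists (canon A). split.
    - apply frame_sound. intros j [Hj|[Hj|Hj]]; subst.
      + apply canon_refl, Hr.
      + apply canon_trans, Ht.
      + apply canon_sym.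
    - apply canon_embeds, Hs. }
  split; [split; [exact C1 | apply complex_complete, C1]|].
  split; [|split; [exact C2 | apply complex_complete, C2]].
  intros i. split; intros H B HB; apply H.
  - intros j [Hj|[Hj|Hj]]; subst.
    + apply HB; unfold Sig_rte; auto.
    + apply HB; unfold Sig_rte; auto.
    + apply mk_sym. intros a b.
      assert (He : slo_valid B i_eucl) by (apply HB; unfold Sig_rte; auto).
      assert (Hr : slo_valid B i_refl) by (apply HB; unfold Sig_rte; auto).
      eapply sle_trans; [|apply (get_eucl B He a b)].
      rewrite (meet_comm B b). apply meet_mono; [apply sle_refl | apply (get_refl B Hr)].
  - intros j [Hj|[Hj|Hj]]; subst.
    + apply HB; unfold Sig_rts; auto.
    + apply HB; unfold Sig_rts; auto.
    + apply mk_eucl. intros a b.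
      assert (Hs : slo_valid B i_sym) by (apply HB; unfold Sig_rts; auto).
      assert (Ht : slo_valid B i_trans) by (apply HB; unfold Sig_rts; auto).
      rewrite (meet_comm B (dia B a)).
      eapply sle_trans; [apply (get_sym B Hs a (dia B b))|].
      apply dia_le, meet_mono; [apply sle_refl | apply (get_trans B Ht)].
Qed.
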